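(* There is an absolute constant $C>0$ with the following property. Let $\epsilon\in(0,1/2]$ with $1/\epsilon$ an integer, and let $\delta\in(0,1/2)$. Let $s\ge C\epsilon^{-1}\ln(1/(\epsilon\delta))$ be an integer. Let $t\ge 1$ and let $x=(x_1,\dots,x_t)$ be a vector of positive weights, where item $i$ has weight $x_i$. Let $S\subseteq[t]$ be a weighted random sample without replacement of size $\min\{t,s\}$ from the items $1,\dots,t$ with weights $x_1,\dots,x_t$. Let $$T=\{i\in[t]: x_i\ge\epsilon\|x_{\mathrm{tail}(1/\epsilon)}\|_1\}.$$ Then: - $|T|\le 2/\epsilon$; - $\Pr[T\subseteq S]\ge 1-\delta$; - whenever $T\subseteq S$, the $\min\{|S|,2/\epsilon\}$ elements of $S$ with largest weights, ties broken arbitrarily, contain $T$.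
   Context: For $x\in\mathbb{R}^t$ and an integer $m\ge 0$, $x_{\mathrm{tail}(m)}$ is the vector equal to $x$ except that its $m$ largest coordinates (in absolute value, ties broken arbitrarily) are set to $0$. **Weighted sampling without replacement.** A single weighted random sample from a finite collection of items with positive weights is one item, where an item of weight $w$ is chosen with probability $w$ divided by the total weight. A weighted random sample without replacement of size $m$ is produced as follows: start with $S=\emptyset$; for $i=1,\dots,m$, draw a single weighted random sample from the items not yet in $S$ and add it to $S$. *)

(* Defs.v *)
From Stdlib Require Import Reals Lra Lia List Arith.
Import ListNotations.
Open Scope R_scope.

Definition idx (t : nat) : list nat := seq 1 t.

Definition sumR (f : nat -> R) (l : list nat) : R :=
  fold_right (fun i acc => f i + acc) 0 l.

(* A is a choice (ties broken arbitrarily) of the m largest coordinates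
   (in absolute value) of x among the indices in U (all of U if |U| <= m). *)
Definition is_top_set (x : nat -> R) (U : list nat) (m : nat) (A : list nat) : Prop :=
  NoDup A /\ length A = Nat.min m (length U) /\ incl A U /\
  (forall i j, In i A -> In j U -> ~ In j A -> Rabs (x j) <= Rabs (x i)).

(* || x_tail(m) ||_1, where A is the chosen set of m largest coordinates:
   the l1 norm of x with the coordinates in A set to 0. *)
Definition tail_norm1 (x : nat -> R) (t : nat) (A : list nat) : R :=
  sumR (fun i => if in_dec Nat.eq_dec i A then 0 else Rabs (x i)) (idx t).

Definition heavy_set (x : nat -> R) (t : nat) (eps N : R) : list nat :=
  filter (fun i => if Rle_dec (eps * N) (x i) then true else false) (idx t).

Definition subsetb (T S : list nat) : bool :=
  forallb (fun i => existsb (Nat.eqb i) S) T.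

(* Weighted sampling without replacement.
   wswor x m avail chosen E = probability that the event E holds for the final
   sample, when starting from the already chosen items [chosen], the remaining
   items [avail], and m more draws are made: at each draw an item i of the
   remaining ones is chosen with probability x i / (total remaining weight). *)
Fixpoint wswor (x : nat -> R) (m : nat) (avail chosen : list nat)
         (E : list nat -> bool) : R :=
  match m with
  | O => if E chosen then 1 else 0
  | S m' =>
      let W := sumR x avail in
      sumR (fun i => x i / W * wswor x m' (remove Nat.eq_dec i avail) (i :: chosen) E)
           avail
  end.

Definition sample_prob (x : nat -> R) (t m : nat) (E : list nat -> bool) : R :=
  wswor x m (idx t) [] E.

(* Main.v *)
Require Import Defs.
From Stdlib Require Import Reals List Arith Lra Lia.
Import ListNotations.
Open Scope R_scope.
Open Scope bool_scope.

Lemma sumR_nil f : sumR f [] = 0. Proof. reflexivity. Qed.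
Lemma sumR_cons f a l : sumR f (a :: l) = f a + sumR f l. Proof. reflexivity. Qed.

Lemma sumR_ext_in (f g : nat -> R) l :
  (forall j, In j l -> f j = g j) -> sumR f l = sumR g l.
Proof. induction l as [|a l IH]; intros H; simpl; auto.
  rewrite H by (left; auto). rewrite IH; auto. intros; apply H; right; auto. Qed.

Lemma sumR_le_in (f g : nat -> R) l :
  (forall j, In j l -> f j <= g j) -> sumR f l <= sumR g l.
Proof. induction l as [|a l IH]; intros H; simpl; [lra|].
  assert (f a <= g a) by (apply H; left; auto).
  assert (sumR f l <= sumR g l) by (apply IH; intros; apply H; right; auto). lra. Qed.

Lemma sumR_plus (f g : nat -> R) l : sumR (fun j => f j + g j) l = sumR f l + sumR g l.
Proof. induction l; simpl; lra. Qed.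

Lemma sumR_scale (c : R) (f : nat -> R) l : sumR (fun j => c * f j) l = c * sumR f l.
Proof. induction l; simpl; [lra|]. rewrite IHl. ring. Qed.

Lemma sumR_const (c : R) l : sumR (fun _ => c) l = INR (length l) * c.
Proof. induction l; simpl length; [simpl; lra|]. rewrite sumR_cons, IHl, S_INR. ring. Qed.

Lemma sumR_zero l : sumR (fun _ => 0) l = 0.
Proof. rewrite sumR_const. lra. Qed.

Lemma sumR_nonneg (f : nat -> R) l : (forall j, In j l -> 0 <= f j) -> 0 <= sumR f l.
Proof. intros H. rewrite <- (sumR_zero l). apply sumR_le_in. auto. Qed.

Lemma sumR_pos (f : nat -> R) l : (forall j, In j l -> 0 < f j) -> l <> [] -> 0 < sumR f l.
Proof. destruct l as [|a l]; intros H Hn; [congruence|]. simpl.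
  assert (0 < f a) by (apply H; left; auto).
  assert (0 <= sumR f l) by (apply sumR_nonneg; intros; left; apply H; right; auto). lra. Qed.

Lemma sumR_in_ge (f : nat -> R) l a : (forall j, In j l -> 0 <= f j) -> In a l -> f a <= sumR f l.
Proof. induction l as [|b l IH]; intros H Ha; [destruct Ha|]. simpl.
  destruct Ha as [<-|Ha].
  - assert (0 <= sumR f l) by (apply sumR_nonneg; intros; apply H; right; auto). lra.
  - assert (0 <= f b) by (apply H; left; auto). assert (f a <= sumR f l) by (apply IH; auto; intros; apply H; right; auto). lra. Qed.

Lemma sumR_remove_le (f : nat -> R) l a : (forall j, In j l -> 0 <= f j) ->
  sumR f (remove Nat.eq_dec a l) <= sumR f l.
Proof. induction l as [|b l IH]; intros H; simpl; [lra|].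
  assert (0 <= f b) by (apply H; left; auto).
  assert (sumR f (remove Nat.eq_dec a l) <= sumR f l) by (apply IH; intros; apply H; right; auto).
  destruct (Nat.eq_dec a b); simpl; lra. Qed.

Lemma sumR_remove_in (f : nat -> R) l a : (forall j, In j l -> 0 <= f j) -> In a l ->
  f a + sumR f (remove Nat.eq_dec a l) <= sumR f l.
Proof. induction l as [|b l IH]; intros H Ha; [destruct Ha|]. simpl.
  assert (0 <= f b) by (apply H; left; auto).
  destruct (Nat.eq_dec a b) as [->|n].
  - assert (sumR f (remove Nat.eq_dec b l) <= sumR f l) by (apply sumR_remove_le; intros; apply H; right; auto). lra.
  - destruct Ha as [->|Ha]; [congruence|]. simpl.
    assert (f a + sumR f (remove Nat.eq_dec a l) <= sumR f l) by (apply IH; auto; intros; apply H; right; auto). lra. Qed.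

Lemma sumR_sub (f : nat -> R) l L : NoDup l -> incl l L -> (forall j, In j L -> 0 <= f j) ->
  sumR f l <= sumR f L.
Proof. revert L. induction l as [|a l IH]; intros L Hn Hi H; simpl.
  - apply sumR_nonneg; auto.
  - inversion Hn; subst.
    assert (sumR f l <= sumR f (remove Nat.eq_dec a L)).
    { apply IH; auto.
      + intros j Hj. apply in_in_remove. intros ->; auto. apply Hi; right; auto.
      + intros j Hj. apply in_remove in Hj. apply H; tauto. }
    assert (f a + sumR f (remove Nat.eq_dec a L) <= sumR f L) by (apply sumR_remove_in; auto; apply Hi; left; auto).
    lra. Qed.

Lemma sumR_lower (f : nat -> R) l c : (forall j, In j l -> c <= f j) -> INR (length l) * c <= sumR f l.
Proof. intros H. rewrite <- sumR_const. apply sumR_le_in. auto. Qed.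

Lemma NoDup_remove' (l : list nat) a : NoDup l -> NoDup (remove Nat.eq_dec a l).
Proof. induction l as [|b l IH]; intros H; simpl; auto. inversion H; subst.
  destruct (Nat.eq_dec a b); auto. constructor; auto. intros Hi. apply in_remove in Hi. tauto. Qed.

Lemma remove_notin (l : list nat) a : ~ In a l -> remove Nat.eq_dec a l = l.
Proof. induction l as [|b l IH]; intros H; simpl; auto. destruct (Nat.eq_dec a b).
  - subst. exfalso; apply H; left; auto.
  - f_equal. apply IH. intros Hi; apply H; right; auto. Qed.

Lemma length_remove_NoDup (l : list nat) a : NoDup l -> In a l -> length (remove Nat.eq_dec a l) = (length l - 1)%nat.
Proof. induction l as [|b l IH]; intros H Ha; [destruct Ha|]. inversion H; subst. simpl.
  destruct (Nat.eq_dec a b) as [->|n].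
  - rewrite remove_notin; auto. lia.
  - destruct Ha as [->|Ha]; [congruence|]. simpl. rewrite IH; auto.
    destruct l; [destruct Ha|]. simpl; lia. Qed.

Lemma filter_remove_len (p : nat -> bool) l a : In a l -> p a = true ->
  (length (filter p (remove Nat.eq_dec a l)) + 1 <= length (filter p l))%nat.
Proof. induction l as [|b l IH]; intros Ha Hp; [destruct Ha|]. simpl.
  destruct (Nat.eq_dec a b) as [->|n].
  - rewrite Hp. simpl.
    assert (forall l, length (filter p (remove Nat.eq_dec b l)) <= length (filter p l))%nat.
    { clear. induction l; simpl; auto. destruct (Nat.eq_dec b a); simpl; destruct (p a); simpl; lia. }
    specialize (H l). lia.
  - destruct Ha as [->|Ha]; [congruence|]. simpl. specialize (IH Ha Hp). destruct (p b); simpl; lia. Qed.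

Lemma filter_split_len (p q : nat -> bool) l :
  length (filter p l) = (length (filter (fun j => p j && q j) l) + length (filter (fun j => p j && negb (q j)) l))%nat.
Proof. induction l; simpl; auto. destruct (p a), (q a); simpl; lia. Qed.

Fixpoint wF (x : nat -> R) (m : nat) (avail chosen : list nat) (f : list nat -> R) : R :=
  match m with
  | O => f chosen
  | S m' =>
      let W := sumR x avail in
      sumR (fun i => x i / W * wF x m' (remove Nat.eq_dec i avail) (i :: chosen) f) avail
  end.

Definition posl (x : nat -> R) (l : list nat) := forall j, In j l -> 0 < x j.

Lemma posl_remove x l a : posl x l -> posl x (remove Nat.eq_dec a l).
Proof. intros H j Hj. apply in_remove in Hj. apply H; tauto. Qed.

Lemma wswor_wF x m av ch E : wswor x m av ch E = wF x m av ch (fun S => if E S then 1 else 0).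
Proof. revert av ch. induction m; intros av ch; simpl; auto.
  apply sumR_ext_in. intros j _. rewrite IHm. reflexivity. Qed.

Lemma wF_ext x m av ch f g : (forall S, f S = g S) -> wF x m av ch f = wF x m av ch g.
Proof. intros H. revert av ch. induction m; intros av ch; simpl; auto.
  apply sumR_ext_in. intros j _. rewrite IHm. reflexivity. Qed.

Lemma coef_nonneg x av j : posl x av -> In j av -> 0 <= x j / sumR x av.
Proof. intros H Hj. assert (0 < x j) by auto.
  assert (0 < sumR x av) by (apply sumR_pos; auto; intros ->; destruct Hj).
  unfold Rdiv. apply Rmult_le_pos; [lra|]. left; apply Rinv_0_lt_compat; lra. Qed.

Lemma wF_le x m av ch f g : posl x av -> (forall S, f S <= g S) -> wF x m av ch f <= wF x m av ch g.
Proof. intros Hp H. revert av ch Hp. induction m; intros av ch Hp; simpl; auto.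
  apply sumR_le_in. intros j Hj. apply Rmult_le_compat_l. apply coef_nonneg; auto.
  apply IHm. apply posl_remove; auto. Qed.

Lemma wF_add x m av ch f g : wF x m av ch (fun S => f S + g S) = wF x m av ch f + wF x m av ch g.
Proof. revert av ch. induction m; intros av ch; simpl; auto.
  rewrite <- sumR_plus. apply sumR_ext_in. intros j _. rewrite IHm. ring. Qed.

Lemma wF_zero x m av ch : wF x m av ch (fun _ => 0) = 0.
Proof. revert av ch. induction m; intros av ch; simpl; auto.
  transitivity (sumR (fun _ => 0) av); [|apply sumR_zero]. apply sumR_ext_in. intros j _. rewrite IHm. ring. Qed.

Lemma wF_sum x m av ch (h : nat -> list nat -> R) T :
  wF x m av ch (fun S => sumR (fun i => h i S) T) = sumR (fun i => wF x m av ch (h i)) T.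
Proof. induction T as [|a T IH].
  - simpl. transitivity (wF x m av ch (fun _ => 0)); [|apply wF_zero]. apply wF_ext. reflexivity.
  - rewrite sumR_cons. rewrite <- IH. rewrite <- wF_add. apply wF_ext. intros S. reflexivity. Qed.

Lemma wF_one x m av ch : posl x av -> NoDup av -> (m <= length av)%nat -> wF x m av ch (fun _ => 1) = 1.
Proof. revert av ch. induction m; intros av ch Hp Hn Hl; simpl; auto.
  assert (av <> []) by (intros ->; simpl in Hl; lia).
  assert (0 < sumR x av) by (apply sumR_pos; auto).
  transitivity (sumR (fun j => / sumR x av * x j) av).
  - apply sumR_ext_in. intros j Hj. rewrite IHm. unfold Rdiv; ring.
    apply posl_remove; auto. apply NoDup_remove'; auto.
    rewrite length_remove_NoDup; auto. lia.
  - rewrite sumR_scale. field. lra. Qed.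

Lemma wF_le1 x m av ch f : posl x av -> (forall S, f S <= 1) -> wF x m av ch f <= 1.
Proof. revert av ch. induction m; intros av ch Hp H; simpl; auto.
  destruct av as [|a l]. simpl; lra.
  assert (0 < sumR x (a::l)) by (apply sumR_pos; auto; discriminate).
  apply Rle_trans with (sumR (fun j => / sumR x (a::l) * x j) (a::l)).
  - apply sumR_le_in. intros j Hj. unfold Rdiv. rewrite (Rmult_comm (/ _)).
    rewrite <- (Rmult_1_r (x j * _)) at 2. apply Rmult_le_compat_l.
    apply coef_nonneg; auto. apply IHm; auto. apply posl_remove; auto.
  - rewrite sumR_scale. right; field. lra. Qed.

Definition ind_notin (i : nat) (S : list nat) : R := if existsb (Nat.eqb i) S then 0 else 1.

Lemma wF_chosen x m av ch i : In i ch -> wF x m av ch (ind_notin i) = 0.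
Proof. revert av ch. induction m; intros av ch H; simpl.
  - unfold ind_notin. replace (existsb (Nat.eqb i) ch) with true; auto.
    symmetry. apply existsb_exists. exists i. split; auto. apply Nat.eqb_refl.
  - transitivity (sumR (fun _ => 0) av); [|apply sumR_zero]. apply sumR_ext_in. intros j _. rewrite IHm. ring. right; auto. Qed.

Lemma wF_full x m av ch i : NoDup av -> In i av -> m = length av -> wF x m av ch (ind_notin i) = 0.
Proof. revert av ch. induction m; intros av ch Hn Hi Hl; simpl.
  - destruct av; [destruct Hi|simpl in Hl; lia].
  - transitivity (sumR (fun _ => 0) av); [|apply sumR_zero]. apply sumR_ext_in. intros j Hj.
    destruct (Nat.eq_dec j i) as [->|n].
    + rewrite wF_chosen. ring. left; auto.
    + rewrite IHm. ring. apply NoDup_remove'; auto. apply in_in_remove; auto.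
      rewrite length_remove_NoDup; auto. lia. Qed.

Lemma sumR_scale_r (c : R) (f : nat -> R) l : sumR (fun j => f j * c) l = sumR f l * c.
Proof. induction l; simpl; [lra|]. rewrite IHl. ring. Qed.

Lemma filter_remove_le (p : nat -> bool) l a :
  (length (filter p (remove Nat.eq_dec a l)) <= length (filter p l))%nat.
Proof. induction l; simpl; auto. destruct (Nat.eq_dec a a0); simpl; destruct (p a0); simpl; lia. Qed.

Section Main.
Variables (x : nat -> R) (A : list nat) (i : nat) (K : R).
Hypothesis HK : 0 < K.

Definition inA j := if in_dec Nat.eq_dec j A then true else false.
Definition bad j := inA j && negb (Nat.eqb j i).
Definition gg j := if in_dec Nat.eq_dec j A then 0 else if Nat.eqb j i then 0 else x j.
Definition qq := K / (K + 1).

Lemma qq_pos : 0 < qq. Proof. unfold qq. apply Rdiv_lt_0_compat; lra. Qed.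

Lemma main_bound : forall m av ch a, posl x av -> In i av -> sumR gg av <= K * x i ->
  (length (filter bad av) <= a)%nat -> wF x m av ch (ind_notin i) <= qq ^ (m - a).
Proof.
  assert (Hq : 0 < qq) by (unfold qq; apply Rdiv_lt_0_compat; lra).
  induction m as [|m IH]; intros av ch a Hp Hi Hg Ha.
  - simpl. unfold ind_notin. destruct existsb; lra.
  - destruct (le_lt_dec (S m) a) as [Hle|Hlt].
    + replace (S m - a)%nat with 0%nat by lia. simpl pow. apply wF_le1; auto.
      intros S. unfold ind_notin. destruct existsb; lra.
    + replace (S m - a)%nat with (S (m - a)) by lia. set (n := (m - a)%nat).
      cbn [wF]. set (W := sumR x av).
      assert (HW : 0 < W) by (apply sumR_pos; auto; intros ->; destruct Hi).
      assert (Hgn : forall j, In j av -> 0 <= gg j).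
      { intros j Hj. unfold gg. destruct in_dec; [lra|]. destruct Nat.eqb; [lra|]. left; auto. }
      apply Rle_trans with (sumR (fun j =>
         (if Nat.eqb j i then 0 else if bad j then x j else 0) * / W * qq ^ (S n) +
         (if Nat.eqb j i then 0 else if bad j then 0 else x j) * / W * qq ^ n) av).
      * apply sumR_le_in. intros j Hj.
        destruct (Nat.eqb_spec j i) as [->|Hji].
        { rewrite wF_chosen by (left; auto). lra. }
        assert (Hp' : posl x (remove Nat.eq_dec j av)) by (apply posl_remove; auto).
        assert (Hi' : In i (remove Nat.eq_dec j av)) by (apply in_in_remove; auto).
        assert (Hg' : sumR gg (remove Nat.eq_dec j av) <= K * x i).
        { eapply Rle_trans; [apply sumR_remove_le; auto|auto]. }
        assert (Hc : 0 <= x j / W) by (apply coef_nonneg; auto).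
        destruct (bad j) eqn:Hb.
        { pose proof (filter_remove_len bad av j Hj Hb).
          assert (IH' := IH (remove Nat.eq_dec j av) (j :: ch) (a - 1)%nat Hp' Hi' Hg' ltac:(lia)).
          replace (m - (a - 1))%nat with (S n) in IH' by (unfold n; lia).
          apply Rle_trans with (x j / W * qq ^ (S n)); [apply Rmult_le_compat_l; auto|right; unfold Rdiv; ring]. }
        { pose proof (filter_remove_le bad av j).
          assert (IH' := IH (remove Nat.eq_dec j av) (j :: ch) a Hp' Hi' Hg' ltac:(lia)).
          fold n in IH'.
          apply Rle_trans with (x j / W * qq ^ n); [apply Rmult_le_compat_l; auto|right; unfold Rdiv; ring]. }
      * rewrite sumR_plus, !sumR_scale_r.
        set (Bw := sumR (fun j => if Nat.eqb j i then 0 else if bad j then x j else 0) av).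
        set (Gw := sumR (fun j => if Nat.eqb j i then 0 else if bad j then 0 else x j) av).
        set (Iw := sumR (fun j => if Nat.eqb j i then x j else 0) av).
        assert (HWs : W = Iw + Bw + Gw).
        { unfold W, Iw, Bw, Gw. rewrite <- !sumR_plus. apply sumR_ext_in. intros j _.
          destruct Nat.eqb; [ring|]. destruct bad; ring. }
        assert (HGw : Gw = sumR gg av).
        { unfold Gw. apply sumR_ext_in. intros j _. unfold gg, bad, inA.
          destruct (Nat.eqb j i); destruct in_dec; simpl; reflexivity. }
        assert (HIw : x i <= Iw).
        { unfold Iw. set (F := fun j => if Nat.eqb j i then x j else 0).
          replace (x i) with (F i) by (unfold F; rewrite Nat.eqb_refl; auto).
          apply sumR_in_ge; auto. intros j Hj. unfold F. destruct Nat.eqb; [left; auto|lra]. }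
        assert (HBw : 0 <= Bw).
        { apply sumR_nonneg. intros j Hj. destruct Nat.eqb; [lra|]. destruct bad; [left; auto|lra]. }
        assert (HGK : Gw <= K * Iw).
        { rewrite HGw. eapply Rle_trans; [apply Hg|]. apply Rmult_le_compat_l; lra. }
        assert (Hkey : Bw * qq + Gw <= qq * W).
        { rewrite HWs. unfold qq.
          apply Rmult_le_reg_r with (K + 1); [lra|].
          replace ((Bw * (K / (K + 1)) + Gw) * (K + 1)) with (Bw * K + Gw * (K + 1)) by (field; lra).
          replace (K / (K + 1) * (Iw + Bw + Gw) * (K + 1)) with (K * (Iw + Bw + Gw)) by (field; lra).
          nra. }
        assert (HQ : 0 < qq ^ n) by (apply pow_lt; auto).
        simpl pow.
        replace (Bw * / W * (qq * qq ^ n) + Gw * / W * qq ^ n) with ((Bw * qq + Gw) * / W * qq ^ n) by ring.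
        replace (qq * qq ^ n) with ((qq * W) * / W * qq ^ n) by (field; lra).
        apply Rmult_le_compat_r; [lra|]. apply Rmult_le_compat_r; [left; apply Rinv_0_lt_compat; lra|]. auto.
Qed.
End Main.

Lemma exp_pow y n : exp y ^ n = exp (INR n * y).
Proof. induction n; simpl pow. simpl; rewrite Rmult_0_l, exp_0; auto.
  rewrite IHn, S_INR, <- exp_plus. f_equal. ring. Qed.

Lemma exp_le_mono a b : a <= b -> exp a <= exp b.
Proof. intros [H|H]; [left; apply exp_increasing; auto|subst; lra]. Qed.

Lemma numeric (k s : nat) d : (2 <= k)%nat -> 0 < d < 1/2 ->
  INR s >= 5 * INR k * ln (INR k / d) ->
  (k <= s)%nat /\ (INR k / (INR k + 1)) ^ (s - k) <= d / (2 * INR k).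
Proof.
  intros Hk Hd Hs. set (K := INR k) in *.
  assert (HK : 2 <= K) by (unfold K; replace 2 with (INR 2) by (simpl; lra); apply le_INR; auto).
  set (L := ln (K / d)) in *.
  assert (H4 : 4 < K / d).
  { apply Rmult_lt_reg_r with d; [lra|]. unfold Rdiv. rewrite Rmult_assoc, Rinv_l by lra. nra. }
  assert (HL : 1 < L).
  { unfold L. rewrite <- (ln_exp 1). apply ln_increasing. apply exp_pos. pose proof exp_le_3. lra. }
  assert (Hln2 : ln 2 < 1).
  { rewrite <- (ln_exp 1). apply ln_increasing. lra. pose proof (exp_ineq1 1 ltac:(lra)). lra. }
  assert (HsK : K < INR s) by nra.
  assert (Hks : (k <= s)%nat) by (apply INR_le; unfold K in HsK; lra).
  split; auto.
  set (n := (s - k)%nat).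
  assert (Hn : INR n = INR s - K) by (unfold n, K; apply minus_INR; auto).
  assert (Hq : K / (K + 1) <= exp (INR 1 * (- / (K + 1)))).
  { simpl INR. rewrite Rmult_1_l. eapply Rle_trans; [|apply exp_ineq1_le].
    right. field. lra. }
  simpl INR in Hq. rewrite Rmult_1_l in Hq.
  eapply Rle_trans. apply pow_incr. split; [|exact Hq]. left; apply Rdiv_lt_0_compat; lra.
  rewrite exp_pow.
  replace (d / (2 * K)) with (exp (ln (d / (2 * K)))) by (rewrite exp_ln; auto; apply Rdiv_lt_0_compat; lra).
  apply exp_le_mono.
  replace (d / (2 * K)) with (/ (2 * (K / d))) by (field; lra).
  rewrite ln_Rinv by (apply Rmult_lt_0_compat; lra).
  rewrite ln_mult by lra. fold L.
  assert (HnL : INR n >= 2 * L * (K + 1)) by nra.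
  replace (INR n * - / (K + 1)) with (- (INR n / (K + 1))) by (field; lra).
  apply Ropp_le_contravar.
  apply Rmult_le_reg_r with (K + 1); [lra|].
  replace (INR n / (K + 1) * (K + 1)) with (INR n) by (field; lra). nra.
Qed.

Lemma filter_neg_len (q : nat -> bool) l :
  length l = (length (filter q l) + length (filter (fun j => negb (q j)) l))%nat.
Proof. induction l; simpl; auto. destruct (q a); simpl; lia. Qed.

Lemma subset_ind T S : 1 <= (if subsetb T S then 1 else 0) + sumR (fun i => ind_notin i S) T.
Proof. induction T as [|a T IH]; simpl. lra.
  unfold subsetb in *. simpl.
  assert (0 <= sumR (fun i => ind_notin i S) T).
  { apply sumR_nonneg. intros; unfold ind_notin; destruct existsb; lra. }
  unfold ind_notin at 1. destruct (existsb (Nat.eqb a) S); simpl; lra. Qed.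

Theorem mainTheorem6 :
  exists C : R, C > 0 /\
  forall (eps : R) (k : nat) (delta : R) (s t : nat) (x : nat -> R),
    0 < eps <= 1/2 ->
    1 / eps = INR k ->
    0 < delta < 1/2 ->
    INR s >= C / eps * ln (1 / (eps * delta)) ->
    (1 <= t)%nat ->
    (forall i, In i (idx t) -> 0 < x i) ->
    forall A : list nat,
      is_top_set x (idx t) k A ->
      let T := heavy_set x t eps (tail_norm1 x t A) in
      INR (length T) <= 2 / eps /\
      sample_prob x t (Nat.min t s) (fun S => subsetb T S) >= 1 - delta /\
      (forall S : list nat,
         NoDup S -> incl S (idx t) -> length S = Nat.min t s ->
         incl T S ->
         forall B : list nat,
           is_top_set x S (Nat.min (length S) (2 * k)) B ->
           incl T B).
Proof.
  exists 5. split; [lra|].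
  intros eps k delta s t x Heps Hk Hd Hs Ht Hx A HA T.
  set (K := INR k) in *.
  assert (HK2 : 2 <= K).
  { rewrite <- Hk. apply Rmult_le_reg_r with eps; [lra|]. unfold Rdiv. rewrite Rmult_1_l, Rinv_l by lra. lra. }
  assert (Hk2 : (2 <= k)%nat) by (apply INR_le; simpl; unfold K in HK2; lra).
  assert (HepsK : eps = / K) by (rewrite <- Hk; field; lra).
  destruct HA as [HAnd [HAlen [HAinc HAdom]]].
  assert (HAk : (length A <= k)%nat) by (rewrite HAlen; lia).
  set (N := tail_norm1 x t A) in *.
  set (hN := fun j => if in_dec Nat.eq_dec j A then 0 else Rabs (x j)).
  assert (HNdef : N = sumR hN (idx t)) by reflexivity.
  assert (HhN : forall j, 0 <= hN j) by (intros j; unfold hN; destruct in_dec; [lra|apply Rabs_pos]).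
  assert (HidxND : NoDup (idx t)) by apply seq_NoDup.
  assert (HT : forall i, In i T <-> In i (idx t) /\ N <= K * x i).
  { intros i. unfold T, heavy_set. rewrite filter_In. fold N.
    destruct (Rle_dec (eps * N) (x i)) as [H|H]; split; intros [H1 H2]; split; auto.
    - rewrite HepsK in H. apply Rmult_le_reg_l with (/ K). apply Rinv_0_lt_compat; lra.
      rewrite <- Rmult_assoc, Rinv_l, Rmult_1_l by lra. auto.
    - discriminate.
    - exfalso. apply H. rewrite HepsK. apply Rmult_le_reg_l with K; [lra|].
      rewrite <- Rmult_assoc, Rinv_r, Rmult_1_l by lra. auto. }
  assert (HTinc : incl T (idx t)) by (intros i Hi; apply HT; auto).
  assert (HTnd : NoDup T) by (apply NoDup_filter; auto).
  assert (HAsub : forall l, NoDup l -> (forall j, In j l -> inA A j = true) -> (length l <= k)%nat).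
  { intros l Hl Hin. eapply Nat.le_trans; [|exact HAk]. apply NoDup_incl_length; auto.
    intros j Hj. specialize (Hin j Hj). unfold inA in Hin. destruct in_dec; auto; discriminate. }
  assert (HV : forall V c, NoDup V -> incl V (idx t) -> (forall j, In j V -> inA A j = false) ->
             (forall j, In j V -> c <= x j) -> INR (length V) * c <= N).
  { intros V c HVn HVi HVa HVc. rewrite HNdef.
    apply Rle_trans with (sumR hN V).
    - apply sumR_lower. intros j Hj. unfold hN. specialize (HVa j Hj). unfold inA in HVa.
      destruct in_dec; [discriminate|]. rewrite Rabs_pos_eq. auto. left; apply Hx, HVi; auto.
    - apply sumR_sub; auto. }
  assert (HTlen : INR (length T) <= 2 * K).
  { rewrite (filter_neg_len (inA A) T), plus_INR.
    replace (2 * K) with (K + K) by ring.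
    apply Rplus_le_compat.
    + unfold K. apply le_INR. apply HAsub. apply NoDup_filter; auto.
      intros j Hj. apply filter_In in Hj. tauto.
    + set (V := filter (fun j => negb (inA A j)) T).
      assert (HVn : NoDup V) by (apply NoDup_filter; auto).
      assert (HVi : incl V (idx t)) by (intros j Hj; apply HTinc; apply filter_In in Hj; tauto).
      assert (HVa : forall j, In j V -> inA A j = false).
      { intros j Hj. apply filter_In in Hj. destruct Hj as [_ Hj]. destruct (inA A j); auto. }
      destruct V as [|v V'] eqn:EV. simpl; lra.
      rewrite <- EV in *.
      assert (Hv : In v V) by (rewrite EV; left; auto).
      assert (HvT : In v T) by (unfold V in Hv; apply filter_In in Hv; tauto).
      assert (Hxv : 0 < x v) by (apply Hx, HVi; auto).
      assert (HNv : N <= K * x v) by (apply HT; auto).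
      assert (HVb : INR (length V) * (N / K) <= N).
      { apply HV; auto. intros j Hj.
        assert (HjT : In j T) by (unfold V in Hj; apply filter_In in Hj; tauto).
        apply HT in HjT. destruct HjT as [_ Hj']. apply Rmult_le_reg_l with K; [lra|].
        unfold Rdiv. replace (K * (N * / K)) with N by (field; lra). auto. }
      assert (HNpos : 0 < N).
      { apply Rlt_le_trans with (x v).  auto.
        pose proof (HV [v] (x v) ltac:(constructor; [intros []|constructor])
             ltac:(intros j [<-|[]]; auto) ltac:(intros j [<-|[]]; auto) ltac:(intros j [<-|[]]; lra)).
        simpl in H. lra. }
      apply Rmult_le_reg_r with (N / K). apply Rdiv_lt_0_compat; lra.
      replace (K * (N / K)) with N by (field; lra). auto. }
  split; [|split].
  - replace (2 / eps) with (2 * K) by (rewrite HepsK; field; lra). auto.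
  -
    unfold sample_prob. rewrite wswor_wF.
    set (m := Nat.min t s).
    assert (Hpos : posl x (idx t)) by exact Hx.
    assert (Hone : wF x m (idx t) [] (fun _ => 1) = 1).
    { apply wF_one; auto. unfold idx; rewrite length_seq. unfold m; lia. }
    assert (Hub : 1 <= wF x m (idx t) [] (fun S => if subsetb T S then 1 else 0)
                   + sumR (fun i => wF x m (idx t) [] (ind_notin i)) T).
    { apply Rle_trans with (wF x m (idx t) [] (fun _ => 1)); [rewrite Hone; lra|].
      rewrite <- wF_sum, <- wF_add. apply wF_le; auto. intros S. apply subset_ind. }
    assert (Hsum : sumR (fun i => wF x m (idx t) [] (ind_notin i)) T <= delta).
    { destruct (le_lt_dec t s) as [Hts|Hts].
      - rewrite (sumR_ext_in _ (fun _ => 0)). rewrite sumR_zero. lra.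
        intros i Hi. apply wF_full; auto. unfold idx; rewrite length_seq. unfold m; lia.
      - assert (Hm : m = s) by (unfold m; lia). rewrite Hm.
        assert (Hs' : INR s >= 5 * INR k * ln (INR k / delta)).
        { replace (5 * INR k) with (5 / eps) by (fold K; rewrite HepsK; field; lra).
          replace (INR k / delta) with (1 / (eps * delta)) by (fold K; rewrite HepsK; field; lra). auto. }
        destruct (numeric k s delta Hk2 Hd Hs') as [Hks Hnum]. fold K in Hnum.
        apply Rle_trans with (sumR (fun _ => delta / (2 * K)) T).
        + apply sumR_le_in. intros i Hi. eapply Rle_trans; [|exact Hnum].
          assert (Hi1 : In i (idx t)) by (apply HT; auto).
          assert (Hi2 : sumR (gg x A i) (idx t) <= K * x i).
          { apply Rle_trans with N. rewrite HNdef. apply sumR_le_in. intros j _.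
            unfold gg, hN. destruct in_dec; [lra|]. destruct Nat.eqb; [apply Rabs_pos|apply Rle_abs].
            apply HT; auto. }
          assert (Hi3 : (length (filter (bad A i) (idx t)) <= k)%nat).
          { apply HAsub. apply NoDup_filter; auto. intros j Hj. apply filter_In in Hj.
            destruct Hj as [_ Hj]. unfold bad in Hj. destruct (inA A j); auto. }
          exact (main_bound x A i K ltac:(lra) s (idx t) [] k Hpos Hi1 Hi2 Hi3).
        + rewrite sumR_const.
          apply Rle_trans with (2 * K * (delta / (2 * K))).
          apply Rmult_le_compat_r; auto. left; apply Rdiv_lt_0_compat; lra. right; field; lra. }
    lra.
  -
    intros S HSn HSi HSl HTS B [HBn [HBl [HBi HBd]]].
    destruct (le_lt_dec (length S) (2*k)) as [Hle|Hgt].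
    + assert (HBS : length B = length S) by (rewrite HBl, (Nat.min_l (length S) (2*k) Hle); apply Nat.min_id).
      intros i Hi. apply (@NoDup_length_incl nat B S HBn ltac:(lia) HBi). auto.
    + intros i Hi. destruct (in_dec Nat.eq_dec i B) as [|HiB]; auto. exfalso.
      assert (HBl2 : length B = (2*k)%nat) by (rewrite HBl; lia).
      assert (HiS : In i S) by auto.
      assert (Hiidx : In i (idx t)) by auto.
      set (U := i :: B).
      assert (HUn : NoDup U) by (constructor; auto).
      assert (HUi : incl U (idx t)) by (intros j [<-|Hj]; auto).
      assert (HUx : forall j, In j U -> x i <= x j).
      { intros j [<-|Hj]. lra. pose proof (HBd j i Hj HiS HiB) as H.
        assert (Hj' : In j (idx t)) by auto.
        rewrite !Rabs_pos_eq in H by (left; apply Hx; auto). auto. }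
      pose proof (filter_neg_len (inA A) U) as HUl.
      assert (Ha : (length (filter (inA A) U) <= k)%nat).
      { apply HAsub; [apply NoDup_filter; auto|]. intros j Hj; apply filter_In in Hj; tauto. }
      set (V := filter (fun j => negb (inA A j)) U) in *.
      assert (HUlen : length U = Datatypes.S (2 * k)%nat) by (unfold U; simpl length; rewrite HBl2; reflexivity).
      assert (HVk : (k + 1 <= length V)%nat).
      { rewrite HUlen in HUl. clear -HUl Ha. clearbody V U. lia. }
      assert (HVN : INR (length V) * x i <= N).
      { apply HV; auto.
        - apply NoDup_filter; auto.
        - intros j Hj; apply HUi; apply filter_In in Hj; tauto.
        - intros j Hj. apply filter_In in Hj. destruct Hj as [_ Hj]. destruct (inA A j); auto.
        - intros j Hj. apply HUx. apply filter_In in Hj; tauto. }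
      assert (HNi : N <= K * x i) by (apply HT; auto).
      assert (HVK : K + 1 <= INR (length V)).
      { apply le_INR in HVk. rewrite plus_INR in HVk. simpl in HVk. unfold K. lra. }
      assert (Hxi : 0 < x i) by auto.
      nra.
Qed.
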